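(* For every integer $n\geq2$, $\mathcal{N}^{\perp}\cap HC(W_n^{*})=\varnothing$.
   Context: $H^2$ denotes the Hardy space of analytic functions $f(z)=\sum_{j\ge0}\hat f(j)z^j$ on the open unit disk $\mathbb{D}$ with $\sum_{j}|\hat f(j)|^2<\infty$. For $n\in\mathbb{N}$, $W_n$ is the bounded operator on $H^2$ given by $W_nf(z)=(1+z+\cdots+z^{n-1})f(z^n)$, $W_n^{*}$ is its adjoint, and $HC(W_n^{*})$ is the set of vectors with dense orbit under $W_n^{*}$. For each integer $k\geq2$, $h_k(z)=\frac{1}{1-z}\log\left(\frac{1+z+\cdots+z^{k-1}}{k}\right)$ (holomorphic branch of the logarithm on $\mathbb{D}$, real at $z=0$), which lies in $H^2$; $\mathcal{N}=\mathrm{span}\{h_k:k\geq2\}$ and $\mathcal{N}^\perp$ is its orthogonal complement in $H^2$. *)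

(* Defs.v *)
From Stdlib Require Import Reals List.
From Coquelicot Require Import Coquelicot.
Open Scope R_scope.

(* Elements of H^2 are represented by their Taylor coefficient sequences. *)
Definition seqC := nat -> C.

Definition Cexp (w : C) : C :=
  (exp (Re w) * cos (Im w), exp (Re w) * sin (Im w)).

Definition inH2 (a : seqC) : Prop :=
  ex_series (fun j => (Cmod (a j)) ^ 2).

Definition is_eval (a : seqC) (z : C) (s : C) : Prop :=
  @is_series C_AbsRing C_NormedModule (fun j => Cmult (a j) (pow_n z j)) s.

Definition inDisk (z : C) : Prop := Cmod z < 1.

Definition geomC (n : nat) (z : C) : C :=
  @sum_n C_AbelianGroup (fun i => pow_n z i) (n - 1).

Definition is_inner (a b : seqC) (l : C) : Prop :=
  @is_series C_AbsRing C_NormedModule (fun j => Cmult (a j) (Cconj (b j))) l.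

Definition W_rel (n : nat) (f g : seqC) : Prop :=
  inH2 g /\
  forall z, inDisk z -> exists s t,
    is_eval g z s /\ is_eval f (pow_n z n) t /\ s = Cmult (geomC n z) t.

Definition is_adjoint_Wn (n : nat) (T : seqC -> seqC) : Prop :=
  (forall g, inH2 g -> inH2 (T g)) /\
  (forall f Wf g, inH2 f -> W_rel n f Wf -> inH2 g ->
     exists l, is_inner Wf g l /\ is_inner f (T g) l).

Definition HC (T : seqC -> seqC) (x : seqC) : Prop :=
  inH2 x /\
  forall y, inH2 y -> forall eps, 0 < eps ->
    exists m s, is_series (fun j => (Cmod (Nat.iter m T x j - y j)) ^ 2) s
                /\ sqrt s < eps.

(* a is (the coefficient sequence of) h_k: the H^2 function
   (1/(1-z)) log((1+...+z^(k-1))/k), the holomorphic branch of the log on D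
   real at 0; i.e. exp((1-z) h_k(z)) = (1+...+z^(k-1))/k on D, h_k(0) real. *)
Definition is_hk (k : nat) (a : seqC) : Prop :=
  inH2 a /\ Im (a 0%nat) = 0 /\
  forall z, inDisk z -> exists s,
    is_eval a z s /\
    Cexp (Cmult (Cminus 1 z) s) = Cmult (geomC k z) (RtoC (/ INR k)).

Definition inN (g : seqC) : Prop :=
  exists (l : list (C * nat * seqC)),
    (forall c k a, In (c, k, a) l -> (2 <= k)%nat /\ is_hk k a) /\
    forall j, g j = fold_right (fun t acc => let '(c, _, a) := t in Cplus (Cmult c (a j)) acc) (RtoC 0) l.

Definition inNperp (f : seqC) : Prop :=
  inH2 f /\ forall g, inN g -> is_inner g f (RtoC 0).

(* Main.v *)
Require Import Defs.
From Stdlib Require Import Reals Lra Lia Psatz List.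
From Coquelicot Require Import Coquelicot.
Open Scope R_scope.

Lemma sum_n_fstC (a : nat -> C) N :
  fst (@sum_n C_AbelianGroup a N) = sum_n (fun n => fst (a n)) N.
Proof.
  induction N.
  - rewrite !sum_O. reflexivity.
  - rewrite !sum_Sn. rewrite <- IHN. reflexivity.
Qed.
Lemma sum_n_sndC (a : nat -> C) N :
  snd (@sum_n C_AbelianGroup a N) = sum_n (fun n => snd (a n)) N.
Proof.
  induction N.
  - rewrite !sum_O. reflexivity.
  - rewrite !sum_Sn. rewrite <- IHN. reflexivity.
Qed.

Lemma is_seriesC_fst (a : nat -> C) l :
  @is_series C_AbsRing C_NormedModule a l -> is_series (fun n => fst (a n)) (fst l).
Proof.
  unfold is_series. intros H.
  eapply filterlim_ext. { intro N. apply sum_n_fstC. }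
  eapply filterlim_comp. exact H.
  intros P [e He]. exists e. intros y Hy. apply He. apply Hy.
Qed.
Lemma is_seriesC_snd (a : nat -> C) l :
  @is_series C_AbsRing C_NormedModule a l -> is_series (fun n => snd (a n)) (snd l).
Proof.
  unfold is_series. intros H.
  eapply filterlim_ext. { intro N. apply sum_n_sndC. }
  eapply filterlim_comp. exact H.
  intros P [e He]. exists e. intros y Hy. apply He. apply Hy.
Qed.
Lemma is_seriesC_pair (a : nat -> C) l :
  is_series (fun n => fst (a n)) (fst l) -> is_series (fun n => snd (a n)) (snd l) ->
  @is_series C_AbsRing C_NormedModule a l.
Proof.
  unfold is_series. intros H1 H2.
  assert (E : forall N, @sum_n C_AbelianGroup a N = (sum_n (fun n => fst (a n)) N, sum_n (fun n => snd (a n)) N)).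
  { intro N. rewrite <- sum_n_fstC, <- sum_n_sndC. destruct (sum_n a N); reflexivity. }
  eapply filterlim_ext. { intro N. symmetry. apply E. }
  intros P [e He].
  destruct (H1 (ball (fst l) e) (locally_ball _ _)) as [N1 HN1].
  destruct (H2 (ball (snd l) e) (locally_ball _ _)) as [N2 HN2].
  exists (max N1 N2). intros n Hn. apply He. split; simpl.
  apply HN1; lia. apply HN2; lia.
Qed.

Lemma sum_n_ge0 (a : nat -> R) N : (forall n, 0 <= a n) -> 0 <= sum_n a N.
Proof.
  intro H. induction N. rewrite sum_O. apply H. rewrite sum_Sn. unfold plus; simpl.
  specialize (H (S N)). lra.
Qed.

Lemma sum_n_incr (a : nat -> R) N : (forall n, 0 <= a n) -> sum_n a N <= sum_n a (S N).
Proof. intro H. rewrite sum_Sn. unfold plus; simpl. specialize (H (S N)). lra. Qed.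

Lemma sum_n_term_le (a : nat -> R) j : (forall n, 0 <= a n) -> a j <= sum_n a j.
Proof.
  intro H. destruct j. rewrite sum_O. lra. rewrite sum_Sn. unfold plus; simpl.
  pose proof (sum_n_ge0 a j H). lra.
Qed.

Lemma is_series_lim_seq (a : nat -> R) l : is_series a l -> is_lim_seq (sum_n a) l.
Proof. intro H. exact H. Qed.

Lemma ex_series_pos_bound (a : nat -> R) M :
  (forall n, 0 <= a n) -> (forall N, sum_n a N <= M) -> ex_series a.
Proof.
  intros H1 H2.
  destruct (ex_finite_lim_seq_incr (sum_n a) M (fun n => sum_n_incr a n H1) H2) as [l Hl].
  exists l. exact Hl.
Qed.

Lemma sum_n_mono (a : nat -> R) N n : (forall n, 0 <= a n) -> (N <= n)%nat -> sum_n a N <= sum_n a n.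
Proof.
  intros H Hn. induction Hn. lra. pose proof (sum_n_incr a m H). lra.
Qed.

Lemma is_series_partial_le (a : nat -> R) l N :
  (forall n, 0 <= a n) -> is_series a l -> sum_n a N <= l.
Proof.
  intros H1 H2.
  assert (Rbar_le (sum_n a N) l).
  { apply (is_lim_seq_le_loc (fun _ => sum_n a N) (sum_n a)).
    - exists N. intros n Hn. apply sum_n_mono; auto.
    - apply is_lim_seq_const.
    - exact H2. }
  exact H.
Qed.

Lemma is_series_term_le (a : nat -> R) l j :
  (forall n, 0 <= a n) -> is_series a l -> a j <= l.
Proof.
  intros H1 H2. pose proof (sum_n_term_le a j H1). pose proof (is_series_partial_le a l j H1 H2). lra.
Qed.

Lemma Cmod_pow_n (w : C) j : Cmod (pow_n w j) = Cmod w ^ j.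
Proof.
  induction j. simpl. apply Cmod_1.
  simpl pow_n. change (mult w (pow_n w j)) with (Cmult w (pow_n w j)).
  rewrite Cmod_mult, IHj. simpl. ring.
Qed.

Lemma inH2_bound (g : seqC) : inH2 g -> exists B, 0 <= B /\ forall j, Cmod (g j) <= B.
Proof.
  intros [l Hl]. exists (1 + l). 
  assert (H0 : forall n, 0 <= Cmod (g n) ^ 2) by (intro; apply pow2_ge_0).
  split. pose proof (is_series_term_le _ _ O H0 Hl). pose proof (H0 O). lra.
  intro j. pose proof (is_series_term_le _ _ j H0 Hl). pose proof (Cmod_ge_0 (g j)). nra.
Qed.

Lemma ex_eval (g : seqC) w : inH2 g -> Cmod w < 1 -> exists s, is_eval g w s.
Proof.
  intros Hg Hw. destruct (inH2_bound g Hg) as [B [HB0 HB]].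
  assert (E : ex_series (fun j => Cmult (g j) (pow_n w j))).
  { apply (@ex_series_le C_AbsRing C_CompleteNormedModule _ (fun j => B * Cmod w ^ j)).
    - intro n. change (Cmod (Cmult (g n) (pow_n w n)) <= B * Cmod w ^ n). rewrite Cmod_mult, Cmod_pow_n.
      apply Rmult_le_compat_r. apply pow_le, Cmod_ge_0. apply HB.
    - apply (ex_series_scal_l (V := R_NormedModule) B (fun n => Cmod w ^ n)).
      apply ex_series_geom. rewrite Rabs_pos_eq. exact Hw. apply Cmod_ge_0. }
  destruct E as [s Hs]. exists s. exact Hs.
Qed.

Lemma sum_n_split {G : AbelianMonoid} (F : nat -> G) a b :
  sum_n F (a + S b) = plus (sum_n F a) (sum_n (fun r => F (a + S r)%nat) b).
Proof.
  induction b.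
  - rewrite sum_O. replace (a + 1)%nat with (S a) by lia. rewrite sum_Sn. reflexivity.
  - replace (a + S (S b))%nat with (S (a + S b)) by lia. rewrite sum_Sn, IHb, sum_Sn.
    rewrite plus_assoc. replace (a + S (S b))%nat with (S (a + S b)) by lia. reflexivity.
Qed.

Lemma sum_n_block {G : AbelianMonoid} (F : nat -> G) n J : (1 <= n)%nat ->
  sum_n F (n * J + (n - 1)) = sum_n (fun j => sum_n (fun r => F (n * j + r)%nat) (n - 1)) J.
Proof.
  intro Hn. induction J.
  - rewrite sum_O. replace (n * 0 + (n - 1))%nat with (n - 1)%nat by lia.
    apply sum_n_ext. intro r. f_equal. lia.
  - replace (n * S J + (n - 1))%nat with ((n * J + (n - 1)) + S (n - 1))%nat by lia.
    rewrite sum_n_split, IHJ, sum_Sn. f_equal. apply sum_n_ext. intro r. f_equal. lia.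
Qed.

Lemma sum_n_Rmult_l (c : R) (f : nat -> R) N : sum_n (fun j => c * f j) N = c * sum_n f N.
Proof.
  induction N. rewrite !sum_O. reflexivity. rewrite !sum_Sn, IHN. unfold plus; simpl. ring.
Qed.

Definition Wop (n : nat) (g : seqC) : seqC := fun m => g (m / n)%nat.

Lemma div_block n j r : (r < n)%nat -> ((n * j + r) / n = j)%nat.
Proof.
  intro H. rewrite Nat.mul_comm, Nat.add_comm, Nat.div_add by lia.
  rewrite Nat.div_small by lia. lia.
Qed.

Lemma inH2_Wop n g : (1 <= n)%nat -> inH2 g -> inH2 (Wop n g).
Proof.
  intros Hn Hg. destruct Hg as [G HG].
  assert (H0 : forall m, 0 <= Cmod (g m) ^ 2) by (intro; apply pow2_ge_0).
  apply (ex_series_pos_bound _ (INR n * G)).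
  - intro; apply pow2_ge_0.
  - intro N. eapply Rle_trans.
    + apply (sum_n_mono _ N (n * N + (n - 1))). intro; apply pow2_ge_0. nia.
    + rewrite sum_n_block by lia.
      rewrite (sum_n_ext _ (fun j => INR n * (Cmod (g j) ^ 2))).
      * rewrite sum_n_Rmult_l.
        apply Rmult_le_compat_l. apply pos_INR.
        apply is_series_partial_le; auto.
      * intro j. unfold Wop. rewrite (sum_n_ext_loc _ (fun _ => Cmod (g j) ^ 2)).
        rewrite sum_n_const. f_equal. f_equal. lia.
        intros r Hr. rewrite div_block by lia. reflexivity.
Qed.

Lemma pow_n_mul (z : C) n j : pow_n z (n * j) = pow_n (pow_n z n) j.
Proof.
  induction j. rewrite Nat.mul_0_r. reflexivity.
  replace (n * S j)%nat with (n + n * j)%nat by lia. rewrite pow_n_plus, IHj. reflexivity.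
Qed.

Lemma sum_n_Cmult_l (c : C) (f : nat -> C) N :
  @sum_n C_AbelianGroup (fun j => Cmult c (f j)) N = Cmult c (@sum_n C_AbelianGroup f N).
Proof.
  induction N. rewrite !sum_O. reflexivity. rewrite !sum_Sn, IHN.
  match goal with |- ?a = ?b => change (@eq C a b) end.
  change (plus ?a ?b) with (Cplus a b). ring.
Qed.

Lemma W_rel_gen n g : (1 <= n)%nat -> inH2 g -> W_rel n g (Wop n g).
Proof.
  intros Hn Hg. split. apply inH2_Wop; auto.
  intros z Hz. unfold inDisk in Hz.
  assert (Hzn : Cmod (pow_n z n) < 1).
  { rewrite Cmod_pow_n. apply pow_lt_1_compat. split. apply Cmod_ge_0. exact Hz. lia. }
  destruct (ex_eval (Wop n g) z (inH2_Wop n g Hn Hg) Hz) as [s Hs].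
  destruct (ex_eval g (pow_n z n) Hg Hzn) as [t Ht].
  exists s, t. split. exact Hs. split. exact Ht.
  unfold is_eval in Hs, Ht.
  pose proof (is_series_scal_l (V := C_NormedModule) (geomC n z) _ _ Ht) as Ht2.
  apply (filterlim_locally_unique (F := eventually)
           (fun J => sum_n (fun m => Cmult (Wop n g m) (pow_n z m)) (n * J + (n - 1)))).
  - eapply filterlim_comp. 2: exact Hs.
    intros P [N HN]. exists N. intros J HJ. apply HN. nia.
  - eapply filterlim_ext. 2: exact Ht2.
    intro J. simpl. change (scal ?a ?b) with (Cmult a b).
    rewrite sum_n_block by lia. apply sum_n_ext. intro j.
    rewrite (sum_n_ext_loc _ (fun r => Cmult (Cmult (g j) (pow_n (pow_n z n) j)) (pow_n z r))).
    + rewrite sum_n_Cmult_l. unfold geomC. match goal with |- ?a = ?b => change (@eq C a b) end. apply Cmult_comm.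
    + intros r Hr. unfold Wop. rewrite div_block by lia. rewrite pow_n_plus, pow_n_mul.
      change (mult ?a ?b) with (Cmult a b). match goal with |- ?a = ?b => change (@eq C a b) end. ring.
Qed.

Fixpoint harm (m : nat) : R := match m with O => 0 | S p => harm p + / INR (S p) end.
Definition Hk (k m : nat) : R := harm m - harm (m / k)%nat - ln (INR k).
Definition hk (k : nat) : seqC := fun m => RtoC (Hk k m).

Lemma Hk_W n k m : (1 <= n)%nat -> (1 <= k)%nat -> Hk (n * k) m - Hk n m = Hk k (m / n)%nat.
Proof.
  intros Hn Hk'. unfold Hk. rewrite <- Nat.Div0.div_div by lia.
  rewrite mult_INR, ln_mult. ring.
  apply lt_0_INR; lia. apply lt_0_INR; lia.
Qed.

Lemma ln_le_sub1 y : 0 < y -> ln y <= y - 1.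
Proof. intro H. pose proof (exp_ineq1_le (ln y)). rewrite exp_ln in H0 by lra. lra. Qed.

Lemma ln_ge_1sub y : 0 < y -> 1 - / y <= ln y.
Proof.
  intro H. pose proof (ln_le_sub1 (/ y) (Rinv_0_lt_compat _ H)). rewrite ln_Rinv in H0 by lra. lra.
Qed.

Lemma ln_step_le (x : R) : 0 < x -> ln (x + 1) - ln x <= / x.
Proof.
  intro H. rewrite <- ln_div by lra. 
  pose proof (ln_le_sub1 ((x + 1) / x)). 
  assert (E : (x + 1) / x - 1 = / x) by (field; lra).
  assert (0 < (x + 1) / x) by (apply Rdiv_lt_0_compat; lra). lra.
Qed.

Lemma ln_step_ge (x : R) : 0 < x -> / (x + 1) <= ln (x + 1) - ln x.
Proof.
  intro H. rewrite <- ln_div by lra.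
  assert (0 < (x + 1) / x) by (apply Rdiv_lt_0_compat; lra).
  pose proof (ln_ge_1sub ((x + 1) / x) H0).
  assert (E : 1 - / ((x + 1) / x) = / (x + 1)) by (field; lra). lra.
Qed.

Lemma harm_bounds q m : (1 <= q)%nat -> (q <= m)%nat ->
  ln (INR m + 1) - ln (INR q + 1) <= harm m - harm q <= ln (INR m) - ln (INR q).
Proof.
  intros Hq Hm. induction Hm.
  - split; lra.
  - change (harm (S m)) with (harm m + / INR (S m)). rewrite !S_INR.
    assert (1 <= INR m) by (apply (le_INR 1); lia).
    pose proof (ln_step_le (INR m + 1) ltac:(lra)). pose proof (ln_step_ge (INR m) ltac:(lra)).
    split; lra.
Qed.

Lemma harm_le m : 0 <= harm m <= INR m.
Proof.
  induction m. simpl. lra.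
  change (harm (S m)) with (harm m + / INR (S m)). rewrite S_INR.
  assert (0 <= INR m) by apply pos_INR.
  assert (0 < / (INR m + 1) <= 1).
  { split. apply Rinv_0_lt_compat; lra. rewrite <- Rinv_1. apply Rinv_le_contravar; lra. }
  lra.
Qed.

Lemma Hk_bound k m : (2 <= k)%nat -> Rabs (Hk k m) * (INR m + 1) <= 2 * INR k ^ 2.
Proof.
  intros Hk2. 
  assert (HK : 2 <= INR k) by (apply (le_INR 2); lia).
  assert (HM : 0 <= INR m) by apply pos_INR.
  assert (Hlnk : 0 < ln (INR k) <= INR k - 1).
  { split. rewrite <- ln_1. apply ln_increasing; lra. apply ln_le_sub1. lra. }
  destruct (Nat.lt_ge_cases m k) as [Hmk | Hmk].
  - unfold Hk. rewrite Nat.div_small by lia. simpl harm.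
    assert (INR m + 1 <= INR k) by (rewrite <- S_INR; apply le_INR; lia).
    pose proof (harm_le m).
    assert (Rabs (harm m - 0 - ln (INR k)) <= INR k) by (apply Rabs_le; lra).
    assert (0 <= Rabs (harm m - 0 - ln (INR k))) by apply Rabs_pos.
    nra.
  - unfold Hk. set (q := (m / k)%nat).
    assert (Hq1 : (1 <= q)%nat) by (apply Nat.div_le_lower_bound; lia).
    assert (Hdm := Nat.div_mod m k ltac:(lia)). assert (Hr := Nat.mod_upper_bound m k ltac:(lia)).
    fold q in Hdm.
    assert (E1 : INR m = INR k * INR q + INR (m mod k)).
    { rewrite Hdm at 1. rewrite plus_INR, mult_INR. reflexivity. }
    assert (E2 : INR (m mod k) + 1 <= INR k) by (rewrite <- S_INR; apply le_INR; lia).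
    assert (E3 : 0 <= INR (m mod k)) by apply pos_INR.
    assert (HQ : 1 <= INR q) by (apply (le_INR 1); lia).
    assert (Hqm : (q <= m)%nat). { unfold q. apply Nat.Div0.div_le_upper_bound; nia. }
    pose proof (harm_bounds q m Hq1 Hqm) as [Hlo Hhi].
    set (K := INR k) in *. set (Q := INR q) in *. set (M := INR m) in *.
    set (r := INR (m mod k)) in *. clearbody K Q M r.
    assert (HKQ : 0 < K * Q) by nra.
    assert (U : ln M - ln Q - ln K <= (M - K * Q) / (K * Q)).
    { replace (ln M - ln Q - ln K) with (ln (M / (K * Q))).
      - replace ((M - K * Q) / (K * Q)) with (M / (K * Q) - 1) by (field; lra).
        apply ln_le_sub1. apply Rdiv_lt_0_compat; nra.
      - rewrite ln_div, ln_mult by nra. ring. }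
    assert (L : 1 - K * (Q + 1) / (M + 1) <= ln (M + 1) - ln (Q + 1) - ln K).
    { replace (ln (M + 1) - ln (Q + 1) - ln K) with (ln ((M + 1) / (K * (Q + 1)))).
      - replace (K * (Q + 1) / (M + 1)) with (/ ((M + 1) / (K * (Q + 1)))) by (field; nra).
        apply ln_ge_1sub. apply Rdiv_lt_0_compat; nra.
      - rewrite ln_div, ln_mult by nra. ring. }
    assert (Hup : (harm m - harm q - ln K) * (M + 1) <= 2 * K ^ 2).
    { assert ((M - K * Q) / (K * Q) * (M + 1) <= 2 * K ^ 2).
      { replace ((M - K * Q) / (K * Q) * (M + 1)) with (r * (M + 1) / (K * Q)) by (rewrite E1; field; nra).
        apply Rmult_le_reg_r with (K * Q). exact HKQ.
        unfold Rdiv. rewrite Rmult_assoc, Rinv_l by nra. rewrite Rmult_1_r.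
        rewrite E1. clear -E2 E3 HQ HK. assert (A0' : 0 <= K * Q) by (apply Rmult_le_pos; lra). assert (A1 : r * (K * Q + r + 1) <= (K - 1) * (K * Q + K)) by (apply Rmult_le_compat; lra).
        assert (A0 : 2 * Q <= K * Q) by (apply Rmult_le_compat_r; lra).
        assert (A2 : (K - 1) * (K * Q + K) <= K * (K * Q + K)) by (apply Rmult_le_compat_r; lra).
        assert (A3 : K * (K * Q + K) <= 2 * K ^ 2 * (K * Q)).
        { replace (K * (K * Q + K)) with (K ^ 2 * (Q + 1)) by ring.
          replace (2 * K ^ 2 * (K * Q)) with (K ^ 2 * (2 * (K * Q))) by ring.
          apply Rmult_le_compat_l. apply pow2_ge_0. lra. }
        lra. }
      nra. }
    assert (Hlow : - (2 * K ^ 2) <= (harm m - harm q - ln K) * (M + 1)).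
    { assert ((1 - K * (Q + 1) / (M + 1)) * (M + 1) = M + 1 - K * (Q + 1)) by (field; lra).
      nra. }
    destruct (Rle_dec 0 (harm m - harm q - ln K)).
    + rewrite Rabs_pos_eq by lra. lra.
    + rewrite Rabs_left by lra. lra.
Qed.

Lemma inv_sq_partial N : sum_n (fun m => / (INR m + 1) ^ 2) N <= 2 - / (INR N + 1).
Proof.
  induction N.
  - rewrite sum_O. simpl. lra.
  - rewrite sum_Sn. change (plus ?a ?b) with (a + b). rewrite S_INR.
    assert (0 <= INR N) by apply pos_INR.
    assert (/ (INR N + 1 + 1) ^ 2 + / (INR N + 1 + 1) <= / (INR N + 1)).
    { assert (E : / (INR N + 1) - / (INR N + 1 + 1) = / ((INR N + 1) * (INR N + 1 + 1))) by (field; lra).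
      assert (/ (INR N + 1 + 1) ^ 2 <= / ((INR N + 1) * (INR N + 1 + 1))).
      { apply Rinv_le_contravar. nra. nra. }
      lra. }
    lra.
Qed.

Lemma ex_inv_sq : ex_series (fun m => / (INR m + 1) ^ 2).
Proof.
  apply (ex_series_pos_bound _ 2).
  - intro n. left. apply Rinv_0_lt_compat. apply pow_lt. pose proof (pos_INR n). lra.
  - intro N. pose proof (inv_sq_partial N). assert (0 < / (INR N + 1)).
    { apply Rinv_0_lt_compat. pose proof (pos_INR N). lra. } lra.
Qed.

Lemma inH2_hk k : (2 <= k)%nat -> inH2 (hk k).
Proof.
  intro Hk2. unfold inH2, hk.
  apply (@ex_series_le R_AbsRing R_CompleteNormedModule _ (fun m => (2 * INR k ^ 2) ^ 2 * / (INR m + 1) ^ 2)).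
  - intro m. change (norm ?x) with (Rabs x). rewrite Cmod_R.
    pose proof (Hk_bound k m Hk2).
    assert (0 < INR m + 1) by (pose proof (pos_INR m); lra).
    rewrite Rabs_pos_eq by (apply pow2_ge_0).
    
    assert (0 <= Rabs (Hk k m)) by apply Rabs_pos.
    assert (Rabs (Hk k m) <= 2 * INR k ^ 2 / (INR m + 1)).
    { apply Rmult_le_reg_r with (INR m + 1). lra. unfold Rdiv. rewrite Rmult_assoc, Rinv_l, Rmult_1_r by lra. lra. }
    replace ((2 * INR k ^ 2) ^ 2 * / (INR m + 1) ^ 2) with ((2 * INR k ^ 2 / (INR m + 1)) ^ 2) by (field; lra).
    apply pow_incr. lra.
  - apply (ex_series_scal_l (V := R_NormedModule) ((2 * INR k ^ 2) ^ 2) _ ex_inv_sq).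
Qed.

Lemma is_seriesC_unique (a : nat -> C) l1 l2 :
  @is_series C_AbsRing C_NormedModule a l1 -> @is_series C_AbsRing C_NormedModule a l2 -> l1 = l2.
Proof. intros H1 H2. exact (filterlim_locally_unique _ _ _ H1 H2). Qed.

Lemma geom_series_C q c : Cmod q < 1 ->
  exists rho, @is_series C_AbsRing C_NormedModule (fun n => Cmult (pow_n q n) c) rho /\
              Cmult (Cminus 1 q) rho = c.
Proof.
  intro Hq.
  assert (E : ex_series (fun n => Cmult (pow_n q n) c)).
  { apply (@ex_series_le C_AbsRing C_CompleteNormedModule _ (fun j => Cmod c * Cmod q ^ j)).
    - intro n. change (Cmod (Cmult (pow_n q n) c) <= Cmod c * Cmod q ^ n). rewrite Cmod_mult, Cmod_pow_n. lra.
    - apply (ex_series_scal_l (V := R_NormedModule) (Cmod c) (fun n => Cmod q ^ n)).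
      apply ex_series_geom. rewrite Rabs_pos_eq. exact Hq. apply Cmod_ge_0. }
  destruct E as [rho0 Hrho]. pose (rho := (rho0 : C)). change rho0 with rho in Hrho. clearbody rho. clear rho0.
  exists rho. split. exact Hrho.
  assert (H1 : @is_series C_AbsRing C_NormedModule (fun n => Cmult (pow_n q (S n)) c) (Cminus rho c)).
  { apply (is_series_incr_1 (fun n => Cmult (pow_n q n) c)).
    match goal with |- is_series _ ?L => replace L with rho end. exact Hrho.
    change (plus ?a ?b) with (Cplus a b). simpl pow_n. change one with (RtoC 1).
    match goal with |- ?a = ?b => change (@eq C a b) end. ring. }
  assert (H2 : @is_series C_AbsRing C_NormedModule (fun n => Cmult (pow_n q (S n)) c) (Cmult q rho)).
  { eapply is_series_ext. 2: exact (is_series_scal_l (V := C_NormedModule) q _ _ Hrho).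
    intro n. simpl. change (scal ?a ?b) with (Cmult a b). change (mult ?a ?b) with (Cmult a b). ring. }
  pose proof (is_seriesC_unique _ _ _ H1 H2). 
  transitivity (Cminus rho (Cmult q rho)). ring. rewrite <- H. ring.
Qed.

Lemma radius_gt1 (a : nat -> R) r : 0 <= r < 1 -> (forall n, Rabs (a n) <= r ^ n) ->
  forall t, Rabs t <= 1 -> Rbar_lt (Rabs t) (CV_radius a).
Proof.
  intros Hr Ha t Ht.
  set (r0 := 2 / (1 + r)).
  assert (Hr0 : 1 < r0) by (unfold r0; apply Rmult_lt_reg_r with (1 + r); [lra|]; unfold Rdiv; rewrite Rmult_assoc, Rinv_l by lra; lra).
  assert (Hrr0 : 0 <= r * r0 <= 1).
  { split. apply Rmult_le_pos; lra. unfold r0. apply Rmult_le_reg_r with (1 + r). lra.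
    unfold Rdiv. replace (r * (2 * / (1 + r)) * (1 + r)) with (2 * r) by (field; lra). lra. }
  assert (HE : Rbar_le r0 (CV_radius a)).
  { destruct (CV_radius_bounded a) as [Hub _]. apply Hub. exists 1. intro n.
    rewrite Rabs_mult, <- RPow_abs, (Rabs_pos_eq r0) by lra.
    apply Rle_trans with (r ^ n * r0 ^ n).
    apply Rmult_le_compat_r. apply pow_le; lra. apply Ha.
    rewrite <- Rpow_mult_distr. rewrite <- (pow1 n). apply pow_incr; lra. }
  eapply Rbar_lt_le_trans. 2: exact HE. simpl. lra.
Qed.

Definition Lterm (w : C) (j : nat) : C := Cmult (pow_n w (S j)) (RtoC (/ INR (S j))).

Lemma fst_le_Cmod (c : C) : Rabs (fst c) <= Cmod c.
Proof. pose proof (Rmax_Cmod c). pose proof (Rmax_l (Rabs (fst c)) (Rabs (snd c))). lra. Qed.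
Lemma snd_le_Cmod (c : C) : Rabs (snd c) <= Cmod c.
Proof. pose proof (Rmax_Cmod c). pose proof (Rmax_r (Rabs (fst c)) (Rabs (snd c))). lra. Qed.

Lemma inv_INR_S_bounds j : 0 < / INR (S j) <= 1.
Proof.
  rewrite S_INR. pose proof (pos_INR j). split. apply Rinv_0_lt_compat; lra.
  rewrite <- Rinv_1. apply Rinv_le_contravar; lra.
Qed.

Lemma pow_n_scalC (t : R) (w : C) k : pow_n (Cmult (RtoC t) w) k = Cmult (RtoC (t ^ k)) (pow_n w k).
Proof.
  induction k. simpl. change one with (RtoC 1). apply injective_projections; simpl; ring.
  simpl pow_n. change (mult ?a ?b) with (Cmult a b). rewrite IHk.
  apply injective_projections; simpl; ring.
Qed.

Definition coefRe (w : C) (n : nat) : R := match n with O => 0 | S p => fst (pow_n w (S p)) * / INR (S p) end.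
Definition coefIm (w : C) (n : nat) : R := match n with O => 0 | S p => snd (pow_n w (S p)) * / INR (S p) end.

Lemma coef_bound (w : C) (f : C -> R) : (forall c, Rabs (f c) <= Cmod c) ->
  forall n, Rabs (match n with O => 0 | S p => f (pow_n w (S p)) * / INR (S p) end) <= Cmod w ^ n.
Proof.
  intros Hf n. destruct n.
  - rewrite Rabs_R0. simpl. lra.
  - rewrite Rabs_mult. pose proof (inv_INR_S_bounds n). rewrite (Rabs_pos_eq (/ _)) by lra.
    rewrite <- Cmod_pow_n. pose proof (Hf (pow_n w (S n))). pose proof (Rabs_pos (f (pow_n w (S n)))).
    nra.
Qed.

Lemma pseries_at1 (a : nat -> R) l : is_series (fun j => a (S j)) l -> a O = 0 -> PSeries a 1 = l.
Proof.
  intros H H0. apply is_pseries_unique. unfold is_pseries.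
  apply (is_series_ext a). { intro k. rewrite pow_n_pow, pow1. symmetry. apply Rmult_1_l. }
  apply is_series_decr_1. rewrite H0. change (plus l (opp 0)) with (l + - 0). 
  replace (l + - 0) with l by (rewrite Ropp_0, Rplus_0_r; reflexivity). exact H.
Qed.

Lemma Raux_eq (x y z : R) : z <> 0 -> x * y = x * (z * (y * / z)).
Proof. intro. field. auto. Qed.

Lemma pseries_derive_val (w : C) (t : R) rho (f : C -> R) :
  (forall a c, f (Cmult (RtoC a) c) = a * f c) ->
  (forall (a : nat -> C) l, @is_series C_AbsRing C_NormedModule a l -> is_series (fun n => f (a n)) (f l)) ->
  @is_series C_AbsRing C_NormedModule (fun n => Cmult (pow_n (Cmult (RtoC t) w) n) w) rho ->
  PSeries (PS_derive (fun n => match n with O => 0 | S p => f (pow_n w (S p)) * / INR (S p) end)) t = f rho.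
Proof.
  intros Hlin Hser Hrho. apply is_pseries_unique. unfold is_pseries.
  apply (is_series_ext (fun n => f (Cmult (pow_n (Cmult (RtoC t) w) n) w))).
  2: exact (Hser _ _ Hrho).
  intro k. rewrite pow_n_scalC.
  replace (Cmult (Cmult (RtoC (t ^ k)) (pow_n w k)) w) with (Cmult (RtoC (t ^ k)) (pow_n w (S k))).
  2: { simpl pow_n. change (mult ?a ?b) with (Cmult a b). ring. }
  rewrite Hlin. unfold PS_derive. change (scal ?a ?b) with (a * b).
  pose proof (inv_INR_S_bounds k). apply Raux_eq. rewrite S_INR. pose proof (pos_INR k). lra.
Qed.

Lemma fst_scal a c : fst (Cmult (RtoC a) c) = a * fst c.
Proof. simpl. ring. Qed.
Lemma snd_scal a c : snd (Cmult (RtoC a) c) = a * snd c.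
Proof. simpl. ring. Qed.

Lemma log_series w : Cmod w < 1 ->
  exists L, @is_series C_AbsRing C_NormedModule (Lterm w) L /\ Cmult (Cexp L) (Cminus 1 w) = 1.
Proof.
  intro Hw.
  assert (E : ex_series (Lterm w)).
  { apply (@ex_series_le C_AbsRing C_CompleteNormedModule _ (fun j => Cmod w ^ j)).
    - intro n. change (Cmod (Lterm w n) <= Cmod w ^ n). unfold Lterm.
      rewrite Cmod_mult, Cmod_pow_n, Cmod_R. pose proof (inv_INR_S_bounds n).
      rewrite Rabs_pos_eq by lra. change (Cmod w ^ S n) with (Cmod w * Cmod w ^ n). pose proof (Cmod_ge_0 w).
      assert (0 <= Cmod w ^ n) by (apply pow_le; lra).
      assert (Cmod w * Cmod w ^ n <= Cmod w ^ n) by nra. nra.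
    - apply ex_series_geom. rewrite Rabs_pos_eq. exact Hw. apply Cmod_ge_0. }
  destruct E as [L0 HL]. pose (L := (L0 : C)). change L0 with L in HL. clearbody L. clear L0.
  exists L. split. exact HL.
  set (au := coefRe w). set (av := coefIm w).
  assert (Hw0 : 0 <= Cmod w < 1) by (split; [apply Cmod_ge_0 | exact Hw]).
  assert (Rau : forall t, Rabs t <= 1 -> Rbar_lt (Rabs t) (CV_radius au)).
  { apply (radius_gt1 au (Cmod w) Hw0). apply (coef_bound w fst fst_le_Cmod). }
  assert (Rav : forall t, Rabs t <= 1 -> Rbar_lt (Rabs t) (CV_radius av)).
  { apply (radius_gt1 av (Cmod w) Hw0). apply (coef_bound w snd snd_le_Cmod). }
  set (u := PSeries au). set (v := PSeries av).
  assert (Hu1 : u 1 = fst L).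
  { apply pseries_at1. 2: reflexivity.
    apply (is_series_ext (fun n => fst (Lterm w n))). 2: exact (is_seriesC_fst _ _ HL).
    intro n. unfold Lterm, au, coefRe. simpl. ring. }
  assert (Hv1 : v 1 = snd L).
  { apply pseries_at1. 2: reflexivity.
    apply (is_series_ext (fun n => snd (Lterm w n))). 2: exact (is_seriesC_snd _ _ HL).
    intro n. unfold Lterm, av, coefIm. simpl. ring. }
  assert (Hu0 : u 0 = 0) by (unfold u; rewrite PSeries_0; reflexivity).
  assert (Hv0 : v 0 = 0) by (unfold v; rewrite PSeries_0; reflexivity).
  set (p := fst w). set (q := snd w).
  assert (Hder : forall t, 0 <= t <= 1 -> exists U V, is_derive u t U /\ is_derive v t V /\
            (1 - t * p) * U + t * q * V = p /\ (1 - t * p) * V - t * q * U = q).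
  { intros t Ht.
    assert (Hq : Cmod (Cmult (RtoC t) w) < 1).
    { rewrite Cmod_mult, Cmod_R, Rabs_pos_eq by lra. pose proof (Cmod_ge_0 w). nra. }
    destruct (geom_series_C _ w Hq) as [rho [Hrho Heq]].
    exists (fst rho), (snd rho). 
    assert (Ht1 : Rabs t <= 1) by (rewrite Rabs_pos_eq; lra).
    split. 
    { unfold u. rewrite <- (pseries_derive_val w t rho fst fst_scal is_seriesC_fst Hrho).
      apply is_derive_PSeries. apply Rau; exact Ht1. }
    split.
    { unfold v. rewrite <- (pseries_derive_val w t rho snd snd_scal is_seriesC_snd Hrho).
      apply is_derive_PSeries. apply Rav; exact Ht1. }
    pose proof (f_equal fst Heq) as E1. pose proof (f_equal snd Heq) as E2.
    simpl in E1, E2. fold p q in E1, E2. split; nra. }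
  set (phi1 := fun t => (1 - t * p) * (exp (u t) * cos (v t)) + t * q * (exp (u t) * sin (v t))).
  set (phi2 := fun t => (1 - t * p) * (exp (u t) * sin (v t)) - t * q * (exp (u t) * cos (v t))).
  assert (P1 : phi1 0 = phi1 1).
  { apply (eq_is_derive (V := R_NormedModule)). 2: lra.
    intros t Ht. destruct (Hder t Ht) as [U [V [Hu [Hv [H1 H2]]]]].
    unfold phi1. auto_derive.
    - repeat split; eexists; eassumption.
    - replace (Derive (fun x => u x) t) with U by (symmetry; apply is_derive_unique; exact Hu).
      replace (Derive (fun x => v x) t) with V by (symmetry; apply is_derive_unique; exact Hv).
      transitivity (exp (u t) * cos (v t) * ((1 - t*p)*U + t*q*V - p) + exp (u t) * sin (v t) * (q - ((1-t*p)*V - t*q*U))).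
      ring. rewrite H1, H2. change (@zero R_NormedModule) with 0. ring. }
  assert (P2 : phi2 0 = phi2 1).
  { apply (eq_is_derive (V := R_NormedModule)). 2: lra.
    intros t Ht. destruct (Hder t Ht) as [U [V [Hu [Hv [H1 H2]]]]].
    unfold phi2. auto_derive.
    - repeat split; eexists; eassumption.
    - replace (Derive (fun x => u x) t) with U by (symmetry; apply is_derive_unique; exact Hu).
      replace (Derive (fun x => v x) t) with V by (symmetry; apply is_derive_unique; exact Hv).
      transitivity (exp (u t) * sin (v t) * ((1 - t*p)*U + t*q*V - p) + exp (u t) * cos (v t) * (((1-t*p)*V - t*q*U) - q)).
      ring. rewrite H1, H2. change (@zero R_NormedModule) with 0. ring. }
  unfold phi1, phi2 in P1, P2. rewrite Hu0, Hv0, Hu1, Hv1 in *.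
  rewrite exp_0, cos_0, sin_0 in P1, P2.
  unfold Cexp, Re, Im. apply injective_projections; simpl; fold p q; lra.
Qed.

Section Lims.
Context {T : Type} {Fl : (T -> Prop) -> Prop} {FF : Filter Fl}.

Lemma limC_plus (f g : T -> C) a b :
  filterlim f Fl (@locally C_UniformSpace a) -> filterlim g Fl (@locally C_UniformSpace b) ->
  filterlim (fun x => Cplus (f x) (g x)) Fl (@locally C_UniformSpace (Cplus a b)).
Proof.
  intros Hf Hg. apply (filterlim_comp_2 f g (fun x y => @plus C_NormedModule x y) Hf Hg).
  apply (filterlim_plus (V := C_NormedModule)).
Qed.

Lemma limC_opp (f : T -> C) a :
  filterlim f Fl (@locally C_UniformSpace a) ->
  filterlim (fun x => Copp (f x)) Fl (@locally C_UniformSpace (Copp a)).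
Proof.
  intros Hf. eapply filterlim_comp. exact Hf. apply (filterlim_opp (V := C_NormedModule)).
Qed.

Lemma limC_scal (f : T -> C) a c :
  filterlim f Fl (@locally C_UniformSpace a) ->
  filterlim (fun x => Cmult c (f x)) Fl (@locally C_UniformSpace (Cmult c a)).
Proof.
  intros Hf. eapply filterlim_comp. exact Hf. apply (filterlim_scal_r (V := C_NormedModule)).
Qed.

Lemma limC_zero (f : T -> C) (g : T -> R) :
  (forall x, Cmod (f x) <= g x) -> filterlim g Fl (locally 0) ->
  filterlim f Fl (@locally C_UniformSpace (RtoC 0)).
Proof.
  intros Hb Hg. apply (filterlim_locally (U := C_UniformSpace)). intro eps.
  pose proof (proj1 (filterlim_locally g 0) Hg eps) as H.
  eapply filter_imp. 2: exact H. intros x Hx.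
  apply (norm_compat1 (V := C_NormedModule)). change (Cmod (Cminus (f x) 0) < eps).
  replace (Cminus (f x) 0) with (f x) by ring.
  eapply Rle_lt_trans. apply Hb. 
  change (Rabs (g x - 0) < eps) in Hx. apply Rabs_def2 in Hx. lra.
Qed.
End Lims.

Fixpoint Qs (w : C) (N : nat) : C := match N with O => RtoC 0 | S p => Cplus (Qs w p) (Lterm w p) end.

Lemma RtoC_plusR a b : RtoC (a + b) = Cplus (RtoC a) (RtoC b).
Proof. apply injective_projections; simpl; ring. Qed.
Lemma RtoC_minusR a b : RtoC (a - b) = Cminus (RtoC a) (RtoC b).
Proof. apply injective_projections; simpl; ring. Qed.

Lemma div_succ_cases k M : (1 <= k)%nat ->
  (S M / k = M / k)%nat \/ ((S M / k = S (M / k)) /\ S M = k * S (M / k))%nat.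
Proof.
  intro Hk. pose proof (Nat.div_mod M k ltac:(lia)) as HM. pose proof (Nat.mod_upper_bound M k ltac:(lia)) as Hb.
  set (a := (M / k)%nat) in *. set (b := (M mod k)%nat) in *.
  destruct (Nat.eq_dec (S b) k) as [Eb | Eb].
  - right. assert (E : (S M = k * S a)%nat) by lia. split; [|exact E].
    rewrite E. rewrite Nat.mul_comm, Nat.div_mul by lia. reflexivity.
  - left. replace (S M) with (k * a + S b)%nat by lia. apply div_block. lia.
Qed.

Lemma step_alg (z S0 hM hM1 X L Q1 Q0 Qz c : C) :
  Cmult (Cminus 1 z) S0 = Cminus (Cminus (Cplus c Qz) Q0) (Cmult hM X) ->
  Cmult hM1 X = Cminus (Cplus (Cmult hM X) L) (Cminus Q1 Q0) ->
  Cmult (Cminus 1 z) (Cplus S0 (Cmult hM1 X)) =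
    Cminus (Cminus (Cplus c (Cplus Qz L)) Q1) (Cmult hM1 (Cmult z X)).
Proof.
  intros H1 H2. replace (Cmult hM1 (Cmult z X)) with (Cmult z (Cmult hM1 X)) by ring.
  rewrite Cmult_plus_distr_l, H1, H2. ring.
Qed.

Lemma key_step k z M : (2 <= k)%nat ->
  Cmult (hk k (S M)) (pow_n z (S M)) =
  Cminus (Cplus (Cmult (hk k M) (pow_n z (S M))) (Lterm z M))
         (Cminus (Qs (pow_n z k) (S M / k)) (Qs (pow_n z k) (M / k))).
Proof.
  intro Hk2. unfold hk, Lterm.
  assert (HS : harm (S M) = harm M + / INR (S M)) by reflexivity.
  destruct (div_succ_cases k M ltac:(lia)) as [Ha | [Ha Hb]].
  - rewrite Ha. assert (E : Hk k (S M) = Hk k M + / INR (S M)) by (unfold Hk; rewrite Ha, HS; ring).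
    rewrite E, RtoC_plusR. ring.
  - rewrite Ha. simpl Qs.
    assert (E : Hk k (S M) = Hk k M + / INR (S M) - / INR (S (M / k))).
    { unfold Hk. rewrite Ha, HS. change (harm (S (M / k))) with (harm (M / k) + / INR (S (M / k))). ring. }
    rewrite E, RtoC_minusR, RtoC_plusR. unfold Lterm. rewrite <- pow_n_mul, <- Hb. ring.
Qed.

Lemma ident k z M : (2 <= k)%nat ->
  Cmult (Cminus 1 z) (@sum_n C_AbelianGroup (fun m => Cmult (hk k m) (pow_n z m)) M) =
  Cminus (Cminus (Cplus (RtoC (- ln (INR k))) (Qs z M)) (Qs (pow_n z k) (M / k))) (Cmult (hk k M) (pow_n z (S M))).
Proof.
  intro Hk2. induction M.
  - rewrite sum_O. rewrite Nat.Div0.div_0_l. simpl Qs. unfold hk, Hk. rewrite Nat.Div0.div_0_l.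
    simpl harm. simpl pow_n. change one with (RtoC 1). change (mult ?a ?b) with (Cmult a b).
    replace (0 - 0 - ln (INR k)) with (- ln (INR k)) by ring. ring.
  - rewrite sum_Sn. change (plus ?a ?b) with (Cplus a b).
    change (Qs z (S M)) with (Cplus (Qs z M) (Lterm z M)).
    change (pow_n z (S (S M))) with (Cmult z (pow_n z (S M))).
    eapply step_alg. exact IHM. apply key_step. exact Hk2.
Qed.

Lemma Cexp_plus a b : Cexp (Cplus a b) = Cmult (Cexp a) (Cexp b).
Proof.
  unfold Cexp, Re, Im. apply injective_projections; simpl; rewrite exp_plus;
  [rewrite cos_plus | rewrite sin_plus]; ring.
Qed.

Lemma Cexp_0 : Cexp (RtoC 0) = RtoC 1.
Proof. unfold Cexp, Re, Im. simpl. rewrite exp_0, cos_0, sin_0. apply injective_projections; simpl; ring. Qed.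

Lemma Cexp_opp a : Cmult (Cexp (Copp a)) (Cexp a) = RtoC 1.
Proof. rewrite <- Cexp_plus. replace (Cplus (Copp a) a) with (RtoC 0) by ring. apply Cexp_0. Qed.

Lemma Cexp_ln (K : R) : 0 < K -> Cexp (RtoC (- ln K)) = RtoC (/ K).
Proof.
  intro H. unfold Cexp, Re, Im. simpl. rewrite cos_0, sin_0, exp_Ropp, exp_ln by exact H.
  apply injective_projections; simpl; ring.
Qed.

Lemma geom_tele (z : C) N :
  Cmult (@sum_n C_AbelianGroup (fun i => pow_n z i) N) (Cminus 1 z) = Cminus 1 (pow_n z (S N)).
Proof.
  induction N.
  - rewrite sum_O. simpl. change one with (RtoC 1). change (mult ?a ?b) with (Cmult a b). ring.
  - rewrite sum_Sn. change (plus ?a ?b) with (Cplus a b). rewrite Cmult_plus_distr_r, IHN.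
    change (pow_n z (S (S N))) with (Cmult z (pow_n z (S N))). ring.
Qed.

Lemma lim_Qs w L : @is_series C_AbsRing C_NormedModule (Lterm w) L ->
  filterlim (fun M => Qs w M) eventually (@locally C_UniformSpace L).
Proof.
  intro HL. apply (filterlim_ext_loc (fun M => sum_n (Lterm w) (pred M))).
  - exists 1%nat. intros M HM. destruct M. lia. simpl pred.
    induction M. rewrite sum_O. simpl. change (@eq C (Lterm w 0) (Cplus 0 (Lterm w 0))). ring.
    rewrite sum_Sn, IHM by lia. reflexivity.
  - eapply filterlim_comp. 2: exact HL. intros P [N HN]. exists (S N). intros n Hn. apply HN. lia.
Qed.

Lemma hk_is_hk k : (2 <= k)%nat -> is_hk k (hk k).
Proof.
  intro Hk2. split. apply inH2_hk; auto. split. reflexivity.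
  intros z Hz. unfold inDisk in Hz.
  assert (HK : 0 < INR k) by (apply lt_0_INR; lia).
  assert (Hzk : Cmod (pow_n z k) < 1).
  { rewrite Cmod_pow_n. apply pow_lt_1_compat. split. apply Cmod_ge_0. exact Hz. lia. }
  destruct (log_series z Hz) as [Lz [HLz ELz]].
  destruct (log_series (pow_n z k) Hzk) as [Lk [HLk ELk]].
  assert (Hz1 : Cminus 1 z <> RtoC 0).
  { intro H. assert (z = RtoC 1) by (transitivity (Cminus 1 (Cminus 1 z)); [ring | rewrite H; ring]).
    subst z. rewrite Cmod_1 in Hz. lra. }
  set (c := RtoC (- ln (INR k))).
  exists (Cmult (Cminus (Cplus c Lz) Lk) (Cinv (Cminus 1 z))). split.
  - unfold is_eval.
    apply (filterlim_ext (fun M => Cmult (Cinv (Cminus 1 z))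
       (Cminus (Cminus (Cplus c (Qs z M)) (Qs (pow_n z k) (M / k))) (Cmult (hk k M) (pow_n z (S M)))))).
    { intro M. unfold c. rewrite <- ident by exact Hk2. match goal with |- ?a = ?b => change (@eq C a b) end. rewrite Cmult_assoc, Cinv_l by exact Hz1. rewrite Cmult_1_l. reflexivity. }
    replace (Cmult (Cminus (Cplus c Lz) Lk) (Cinv (Cminus 1 z)))
      with (Cmult (Cinv (Cminus 1 z)) (Cplus (Cplus (Cplus c Lz) (Copp Lk)) (Copp (RtoC 0)))) by ring.
    apply limC_scal. apply limC_plus. apply limC_plus. apply limC_plus.
    + apply filterlim_const.
    + apply lim_Qs; exact HLz.
    + apply limC_opp. eapply filterlim_comp. 2: apply lim_Qs; exact HLk.
      intros P [N HN]. exists (k * N)%nat. intros M HM. apply HN.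
      apply Nat.div_le_lower_bound; lia.
    + apply limC_opp. destruct (inH2_bound _ (inH2_hk k Hk2)) as [B [HB0 HB]].
      apply (limC_zero _ (fun M => (B * Cmod z) * Cmod z ^ M)).
      * intro M. rewrite Cmod_mult, Cmod_pow_n. simpl pow. pose proof (HB M). pose proof (Cmod_ge_0 z).
        assert (0 <= Cmod z ^ M) by (apply pow_le; lra). rewrite <- Rmult_assoc. apply Rmult_le_compat_r. lra. apply Rmult_le_compat_r. lra. apply HB.
      * pose proof (is_lim_seq_scal_l _ (B * Cmod z) _ (is_lim_seq_geom (Cmod z) ltac:(rewrite Rabs_pos_eq; [exact Hz | apply Cmod_ge_0]))) as H.
        rewrite Rbar_mult_0_r in H. exact H.
  - replace (Cmult (Cminus 1 z) (Cmult (Cminus (Cplus c Lz) Lk) (Cinv (Cminus 1 z))))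
      with (Cplus (Cplus c Lz) (Copp Lk)) by (field; exact Hz1).
    rewrite !Cexp_plus. unfold c. rewrite Cexp_ln by exact HK.
    assert (EB : Cexp (Copp Lk) = Cminus 1 (pow_n z k)).
    { transitivity (Cmult (Cexp (Copp Lk)) (Cmult (Cexp Lk) (Cminus 1 (pow_n z k)))).
      rewrite ELk. ring. rewrite Cmult_assoc, Cexp_opp. ring. }
    rewrite EB. 
    assert (EG : Cminus 1 (pow_n z k) = Cmult (geomC k z) (Cminus 1 z)).
    { unfold geomC. rewrite geom_tele. replace (S (k - 1)) with k by lia. reflexivity. }
    rewrite EG.
    transitivity (Cmult (Cmult (RtoC (/ INR k)) (geomC k z)) (Cmult (Cexp Lz) (Cminus 1 z))).
    ring. rewrite ELz. ring.
Qed.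

Lemma inH2_ext (a b : seqC) : (forall j, a j = b j) -> inH2 a -> inH2 b.
Proof.
  intros H [l Hl]. exists l. eapply is_series_ext. 2: exact Hl. intro n. simpl. rewrite H. reflexivity.
Qed.

Lemma inH2_comb (c : C) (a b : seqC) : inH2 a -> inH2 b -> inH2 (fun j => Cplus (Cmult c (a j)) (b j)).
Proof.
  intros Ha Hb. unfold inH2.
  apply (@ex_series_le R_AbsRing R_CompleteNormedModule _
           (fun j => 2 * (Cmod c ^ 2 * Cmod (a j) ^ 2) + 2 * Cmod (b j) ^ 2)).
  - intro j. change (norm ?x) with (Rabs x). rewrite Rabs_pos_eq by apply pow2_ge_0.
    pose proof (Cmod_triangle (Cmult c (a j)) (b j)). rewrite Cmod_mult in H.
    pose proof (Cmod_ge_0 (Cplus (Cmult c (a j)) (b j))).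
    pose proof (Cmod_ge_0 c). pose proof (Cmod_ge_0 (a j)). pose proof (Cmod_ge_0 (b j)).
    set (X := Cmod (Cplus (Cmult c (a j)) (b j))) in *. set (u := Cmod c * Cmod (a j)) in *.
    set (v := Cmod (b j)) in *.
    assert (0 <= u) by (unfold u; apply Rmult_le_pos; lra).
    assert (X ^ 2 <= (u + v) ^ 2) by (apply pow_incr; lra).
    assert ((u + v) ^ 2 <= 2 * u ^ 2 + 2 * v ^ 2) by (pose proof (pow2_ge_0 (u - v)); lra).
    replace (Cmod c ^ 2 * Cmod (a j) ^ 2) with (u ^ 2) by (unfold u; ring). lra.
  - apply (ex_series_plus (V := R_NormedModule)).
    + apply (ex_series_scal_l (V := R_NormedModule) 2).
      apply (ex_series_scal_l (V := R_NormedModule) (Cmod c ^ 2)). exact Ha.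
    + apply (ex_series_scal_l (V := R_NormedModule) 2). exact Hb.
Qed.

Lemma inH2_zero : inH2 (fun _ => RtoC 0).
Proof.
  unfold inH2. apply (@ex_series_le R_AbsRing R_CompleteNormedModule _ (fun n => 0 * (/2) ^ n)).
  - intro n. change (norm ?x) with (Rabs x). rewrite Cmod_0. simpl. rewrite Rmult_0_l, Rmult_0_l, Rabs_R0. lra.
  - apply (ex_series_scal_l (V := R_NormedModule) 0). apply ex_series_geom. rewrite Rabs_pos_eq; lra.
Qed.

Definition fold_hk (l : list (C * nat)) (j : nat) : C :=
  fold_right (fun t acc => Cplus (Cmult (fst t) (hk (snd t) j)) acc) (RtoC 0) l.

Definition Sspan (g : seqC) : Prop :=
  exists l : list (C * nat), (forall t, In t l -> (2 <= snd t)%nat) /\ forall j, g j = fold_hk l j.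

Lemma Sspan_inN g : Sspan g -> inN g.
Proof.
  intros [l [Hl Hg]]. exists (map (fun t => (fst t, snd t, hk (snd t))) l). split.
  - intros c k a Hin. apply in_map_iff in Hin. destruct Hin as [t [Ht Hin]].
    inversion Ht; subst. split. apply Hl; auto. apply hk_is_hk. apply Hl; auto.
  - intro j. rewrite Hg. clear Hg Hl. induction l as [|t l IH]. reflexivity.
    simpl. rewrite IH. reflexivity.
Qed.

Lemma Sspan_inH2 g : Sspan g -> inH2 g.
Proof.
  intros [l [Hl Hg]]. apply (inH2_ext (fold_hk l)). intro j. symmetry. apply Hg.
  clear Hg. induction l as [|t l IH].
  - apply inH2_zero.
  - apply inH2_comb. apply inH2_hk. apply Hl. left. reflexivity.
    apply IH. intros t' Ht'. apply Hl. right. exact Ht'.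
Qed.

Lemma Sspan_Wop n g : (2 <= n)%nat -> Sspan g -> Sspan (Wop n g).
Proof.
  intros Hn [l [Hl Hg]].
  exists (flat_map (fun t => (fst t, (n * snd t)%nat) :: (Copp (fst t), n) :: nil) l). split.
  - intros t Ht. apply in_flat_map in Ht. destruct Ht as [t0 [Ht0 Hin]].
    pose proof (Hl t0 Ht0). simpl in Hin. destruct Hin as [E | [E | []]]; subst t; simpl; nia.
  - intro m. unfold Wop. rewrite Hg. clear Hg. induction l as [|t l IH].
    + reflexivity.
    + simpl. rewrite <- IH by (intros t' Ht'; apply Hl; right; exact Ht').
      assert (Hk : (2 <= snd t)%nat) by (apply Hl; left; reflexivity).
      assert (E : hk (snd t) (m / n)%nat = Cminus (hk (n * snd t) m) (hk n m)).
      { unfold hk. rewrite <- Hk_W by lia. apply injective_projections; simpl; ring. }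
      rewrite E. ring.
Qed.

Lemma Sspan_hk n : (2 <= n)%nat -> Sspan (hk n).
Proof.
  intro H. exists ((RtoC 1, n) :: nil). split.
  - intros t [E | []]. subst t. simpl. exact H.
  - intro j. simpl. ring.
Qed.

Lemma Cmod_sq (a : C) : Cmod a ^ 2 = fst a ^ 2 + snd a ^ 2.
Proof. apply Cmod2_alt. Qed.

Lemma dist_lower (x y : seqC) s :
  inH2 x -> is_inner y x (RtoC 0) ->
  is_series (fun j => Cmod (Cminus (x j) (y j)) ^ 2) s -> Cmod (y O) ^ 2 <= s.
Proof.
  intros [X HX] Hin Hs.
  pose proof (is_seriesC_fst _ _ Hin) as Hre. simpl in Hre.
  assert (Hy : is_series (fun j => Cmod (y j) ^ 2) (plus (plus s (opp X)) (scal 2 0))).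
  { apply (is_series_ext (fun j => plus (plus (Cmod (Cminus (x j) (y j)) ^ 2) (opp (Cmod (x j) ^ 2)))
                                 (scal 2 (fst (Cmult (y j) (Cconj (x j))))))).
    - intro j. repeat change (plus ?a ?b) with (a + b). change (opp ?a) with (- a). change (scal ?a ?b) with (a * b).
      rewrite !Cmod_sq. simpl. match goal with |- ?a = ?b => change (@eq R a b) end. ring.
    - apply (is_series_plus (V := R_NormedModule)).
      apply (is_series_plus (V := R_NormedModule)). exact Hs. apply (is_series_opp (V := R_NormedModule)). exact HX.
      apply (is_series_scal_l (V := R_NormedModule)). exact Hre. }
  change (plus (plus s (opp X)) (scal 2 0)) with (s + - X + 2 * 0) in Hy.
  assert (H0 : forall j, 0 <= Cmod (y j) ^ 2) by (intro; apply pow2_ge_0).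
  assert (H0' : forall j, 0 <= Cmod (x j) ^ 2) by (intro; apply pow2_ge_0).
  pose proof (is_series_term_le _ _ O H0 Hy).
  pose proof (is_series_term_le _ _ O H0' HX). pose proof (H0' O). lra.
Qed.

Theorem mainTheorem18 :
  forall (n : nat), (2 <= n)%nat ->
  forall (Wstar : seqC -> seqC), is_adjoint_Wn n Wstar ->
  forall f : seqC, ~ (inNperp f /\ HC Wstar f).
Proof.
  intros n Hn T [Tinv Tadj] f [[Hf Hperp] [_ Hdense]].
  assert (Inv : forall m, inH2 (Nat.iter m T f) /\
                 forall g, Sspan g -> is_inner g (Nat.iter m T f) (RtoC 0)).
  { induction m as [|m [IH1 IH2]].
    - split. exact Hf. intros g Hg. apply Hperp. apply Sspan_inN. exact Hg.
    - simpl. split. apply Tinv. exact IH1.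
      intros g Hg.
      destruct (Tadj g (Wop n g) (Nat.iter m T f) (Sspan_inH2 g Hg) (W_rel_gen n g ltac:(lia) (Sspan_inH2 g Hg)) IH1)
        as [l [Hl1 Hl2]].
      pose proof (IH2 _ (Sspan_Wop n g Hn Hg)) as H0.
      rewrite (is_seriesC_unique _ _ _ Hl1 H0) in Hl2. exact Hl2. }
  assert (Hln : 0 < ln (INR n)).
  { rewrite <- ln_1. apply ln_increasing. lra. apply (lt_INR 1). lia. }
  destruct (Hdense (hk n) (inH2_hk n Hn) (ln (INR n)) Hln) as [m [s [Hs Hsq]]].
  destruct (Inv m) as [I1 I2].
  pose proof (dist_lower _ _ s I1 (I2 _ (Sspan_hk n Hn)) Hs) as Hlow.
  assert (E : Cmod (hk n O) = ln (INR n)).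
  { unfold hk, Hk. rewrite Nat.Div0.div_0_l. simpl harm. rewrite Cmod_R.
    replace (0 - 0 - ln (INR n)) with (- ln (INR n)) by ring. rewrite Rabs_Ropp, Rabs_pos_eq; lra. }
  rewrite E in Hlow.
  assert (sqrt (ln (INR n) ^ 2) <= sqrt s) by (apply sqrt_le_1_alt; exact Hlow).
  rewrite sqrt_pow2 in H by lra. lra.
Qed.
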